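(* Let $I=[x_1,x_N]$ with partition $x_1<\dots<x_N$ and affine maps $u_i(x)=a_ix+b_i$ with $u_i(x_1)=x_i$, $u_i(x_N)=x_{i+1}$ ($i\in\mathbb{N}_{N-1}$). Let $f,g\in C(I)$ with $f\ge g$ on $I$ and let $\{q_n\}$ be a sequence in $(0,1]$ with $\lim q_n=1$. Set $\phi(f-g,i)=\min_{x\in I}(f-g)(u_i(x))$, $\Phi_n(f)=\max_{x\in I}M_{n,q_n}f(x)$, $\phi(g)=\min_{x\in I}g(x)$. Suppose the continuous scaling functions satisfy (1) $\|\alpha\|_\infty<1$ and (2) for all $n\in\mathbb{N}$, $i\in\mathbb{N}_{N-1}$, $x\in I$: \[ 0\le\alpha_i(x)\le\min\left\{\frac{\phi(f-g,i)}{\Phi_n(f)-\phi(g)},1\right\}. \] Then the quantum MKZ-fractal functions satisfy $f^{(q_n,\alpha)}_n\ge g$ on $I$ for every $n\in\mathbb{N}$, and $f^{(q_n,\alpha)}_n\to f$ uniformly on $I$.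
   Context: For $q\in(0,1]$: $[k]_q=\frac{1-q^k}{1-q}$ ($q\ne1$), $[k]_1=k$, $q$-factorials, $\binom{n}{k}_q=\frac{[n]_q!}{[k]_q![n-k]_q!}$. Quantum MKZ operator: $M_{n,q}h(x)=P_{n,q}(x)\sum_{k\ge0}\binom{n+k}{k}_q\left(\frac{x-x_1}{x_N-x_1}\right)^k h\!\left(x_1+(x_N-x_1)\frac{[k]_q}{[k+n]_q}\right)$ for $x_1\le x<x_N$, $M_{n,q}h(x_N)=h(x_N)$, $P_{n,q}(x)=\prod_{j=0}^n(x_N-x_1-q^j(x-x_1))/(x_N-x_1)^{n+1}$. $\|\alpha\|_\infty=\max_i\|\alpha_i\|_\infty$. The quantum MKZ-fractal function $h^{(q,\alpha)}_n$ of $h\in C(I)$ is the unique $G\in C(I)$ with $G(u_i(x))=h(u_i(x))+\alpha_i(x)(G(x)-M_{n,q}h(x))$ for all $x\in I$, $i\in\mathbb{N}_{N-1}$. *)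

(* Defs.v *)
From Stdlib Require Import Reals Lra.
From Coquelicot Require Import Coquelicot.
Open Scope R_scope.

Definition qint (q : R) (k : nat) : R :=
  if Req_EM_T q 1 then INR k else (1 - q ^ k) / (1 - q).

Fixpoint qfact (q : R) (k : nat) : R :=
  match k with
  | O => 1
  | S k' => qfact q k' * qint q (S k')
  end.

Definition qbinom (q : R) (n k : nat) : R :=
  qfact q n / (qfact q k * qfact q (n - k)).

Fixpoint prodR (F : nat -> R) (m : nat) : R :=
  match m with
  | O => F O
  | S m' => prodR F m' * F (S m')
  end.

Definition Pnq (x1 xN : R) (n : nat) (q : R) (x : R) : R :=
  prodR (fun j => xN - x1 - q ^ j * (x - x1)) n / (xN - x1) ^ (S n).

(* Quantum MKZ operator M_{n,q} on I = [x1, xN].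
   Outside I the value is irrelevant; we set it to h x. *)
Definition MKZ (x1 xN : R) (n : nat) (q : R) (h : R -> R) (x : R) : R :=
  if Rle_dec x1 x then
    if Rlt_dec x xN then
      Pnq x1 xN n q x *
      Series (fun k => qbinom q (n + k) k * ((x - x1) / (xN - x1)) ^ k *
                       h (x1 + (xN - x1) * (qint q k / qint q (k + n))))
    else h x
  else h x.

Definition inI (x1 xN y : R) : Prop := x1 <= y <= xN.

Definition contI (x1 xN : R) (h : R -> R) : Prop :=
  forall y, inI x1 xN y ->
    filterlim h (within (inI x1 xN) (locally y)) (locally (h y)).

(* min / max over I (attained for continuous functions on the compact I) *)
Definition minI (x1 xN : R) (h : R -> R) : R :=
  real (Glb_Rbar (fun v => exists y, inI x1 xN y /\ v = h y)).
Definition maxI (x1 xN : R) (h : R -> R) : R :=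
  real (Lub_Rbar (fun v => exists y, inI x1 xN y /\ v = h y)).

(* Main.v *)
Require Import Defs.
From Stdlib Require Import Reals Lra Lia.
From Coquelicot Require Import Coquelicot.
Open Scope R_scope.

Lemma qint_0 q : qint q 0 = 0.
Proof. unfold qint. destruct (Req_EM_T q 1); simpl. reflexivity. field. lra. Qed.

Lemma qint_add q k n : qint q (k + n) = qint q k + q ^ k * qint q n.
Proof. unfold qint. destruct (Req_EM_T q 1) as [e|e].
 - rewrite plus_INR, e, pow1. ring.
 - rewrite pow_add. field. lra. Qed.

Lemma qint_1 q : qint q 1 = 1.
Proof. unfold qint. destruct (Req_EM_T q 1); simpl. reflexivity. field. lra. Qed.

Lemma qint_S q m : qint q (S m) = qint q m + q ^ m.
Proof. replace (S m) with (m + 1)%nat by lia. rewrite qint_add, qint_1. ring. Qed.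

Lemma qint_S' q m : qint q (S m) = 1 + q * qint q m.
Proof. replace (S m) with (1 + m)%nat by lia. rewrite qint_add, qint_1. simpl. ring. Qed.

Lemma qint_ge1 q m : 0 < q -> 1 <= qint q (S m).
Proof. intro Hq. induction m. rewrite qint_1; lra.
 rewrite qint_S. pose proof (pow_lt q (S m) Hq). lra. Qed.

Lemma qint_pos q m : 0 < q -> (1 <= m)%nat -> 0 < qint q m.
Proof. intros Hq Hm. destruct m. lia. pose proof (qint_ge1 q m Hq). lra. Qed.

Lemma qint_nonneg q m : 0 < q -> 0 <= qint q m.
Proof. intros Hq. destruct m. rewrite qint_0; lra. pose proof (qint_ge1 q m Hq). lra. Qed.

Lemma qint_mono q m p : 0 < q -> (m <= p)%nat -> qint q m <= qint q p.
Proof. intros Hq H. induction H. lra. rewrite qint_S. pose proof (pow_lt q m0 Hq). lra. Qed.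

Lemma qfact_pos q k : 0 < q -> 0 < qfact q k.
Proof. intro Hq. induction k; simpl. lra. apply Rmult_lt_0_compat; auto. apply qint_pos; auto; lia. Qed.

Definition cb q n k := qbinom q (n + k) k.

Lemma cb_eq q n k : cb q n k = qfact q (n + k) / (qfact q k * qfact q n).
Proof. unfold cb, qbinom. replace (n + k - k)%nat with n by lia. reflexivity. Qed.

Lemma cb_pos q n k : 0 < q -> 0 < cb q n k.
Proof. intro Hq. rewrite cb_eq. pose proof (qfact_pos q (n+k) Hq). pose proof (qfact_pos q k Hq).
 pose proof (qfact_pos q n Hq). apply Rdiv_lt_0_compat; auto. apply Rmult_lt_0_compat; auto. Qed.

Lemma cb_0k q k : 0 < q -> cb q 0 k = 1.
Proof. intro Hq. rewrite cb_eq. simpl. pose proof (qfact_pos q k Hq). field. lra. Qed.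

Lemma cb_n0 q n : 0 < q -> cb q n 0 = 1.
Proof. intro Hq. rewrite cb_eq. rewrite Nat.add_0_r. simpl. pose proof (qfact_pos q n Hq). field. lra. Qed.

Definition node q n k := qint q k / qint q (k + n).

Lemma cb_R2 q n k : 0 < q -> cb q n (S k) * node q n (S k) = cb q n k.
Proof. intro Hq. unfold node. rewrite !cb_eq. replace (n + S k)%nat with (S (n + k)) by lia.
 replace (S k + n)%nat with (S (n + k)) by lia. simpl.
 pose proof (qfact_pos q (n+k) Hq). pose proof (qfact_pos q k Hq). pose proof (qfact_pos q n Hq).
 pose proof (qint_ge1 q k Hq). pose proof (qint_ge1 q (n+k) Hq). field. repeat split; lra. Qed.

Lemma cb_R3 q n k : 0 < q -> cb q (S n) (S k) = cb q (S n) k + q ^ (S k) * cb q n (S k).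
Proof. intro Hq. rewrite !cb_eq. replace (S n + S k)%nat with (S (S (n + k))) by lia.
 replace (S n + k)%nat with (S (n + k)) by lia. replace (n + S k)%nat with (S (n + k)) by lia.
 assert (E: qint q (S (S (n + k))) = qint q (S k) + q ^ (S k) * qint q (S n)).
 { rewrite <- qint_add. f_equal. lia. }
 simpl qfact. rewrite E.
 pose proof (qfact_pos q (n+k) Hq). pose proof (qfact_pos q k Hq). pose proof (qfact_pos q n Hq).
 pose proof (qint_ge1 q k Hq). pose proof (qint_ge1 q n Hq). pose proof (qint_ge1 q (n+k) Hq). field. repeat split; lra. Qed.

Lemma is_series_lim (a : nat -> R) l : is_series a l <-> is_lim_seq (sum_n a) l.
Proof. split; intro H; exact H. Qed.
Lemma sum_n_le_R (a b : nat -> R) n : (forall k, a k <= b k) -> sum_n a n <= sum_n b n.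
Proof. intro H. induction n. rewrite !sum_O. auto. rewrite !sum_Sn. unfold plus; simpl. specialize (H (S n)). lra. Qed.
Lemma is_series_le_R (a b : nat -> R) la lb : is_series a la -> is_series b lb -> (forall k, a k <= b k) -> la <= lb.
Proof. intros Ha Hb H. apply (proj1 (is_series_lim a la)) in Ha. apply (proj1 (is_series_lim b lb)) in Hb.
 pose proof (is_lim_seq_le _ _ _ _ (fun n => sum_n_le_R a b n H) Ha Hb). exact H0. Qed.
Lemma is_series_scal_R c (a : nat -> R) l : is_series a l -> is_series (fun k => c * a k) (c * l).
Proof. intro H. apply (is_series_scal c a l H). Qed.
Lemma is_series_plus_R (a b : nat -> R) la lb : is_series a la -> is_series b lb -> is_series (fun k => a k + b k) (la + lb).
Proof. intros H1 H2. apply (is_series_plus _ _ _ _ H1 H2). Qed.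
Lemma is_series_minus_R (a b : nat -> R) la lb : is_series a la -> is_series b lb -> is_series (fun k => a k - b k) (la - lb).
Proof. intros H1 H2. apply (is_series_minus _ _ _ _ H1 H2). Qed.
Lemma is_series_shift1 (a : nat -> R) l t : is_series a l -> is_series (fun k => match k with O => 0 | S j => t * a j end) (t * l).
Proof. intro H. apply is_series_decr_1. simpl.
 match goal with |- is_series _ ?L => replace L with (t*l) by (unfold plus, opp; simpl; ring) end.
 apply is_series_ext with (fun k => t * a k). reflexivity. now apply is_series_scal_R. Qed.

Lemma sum_n_le_lim (b : nat -> R) L K : (forall k, 0 <= b k) -> is_series b L -> sum_n b K <= L.
Proof. intros Hb HL. apply (proj1 (is_series_lim b L)) in HL.
 apply (proj1 (is_lim_seq_incr_n _ K L)) in HL.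
 assert (H: Rbar_le (sum_n b K) L).
 { apply (is_lim_seq_le (fun _ => sum_n b K) (fun n => sum_n b (n + K)) _ _); [|apply is_lim_seq_const|exact HL].
   intro n. induction n. simpl. lra. simpl (S n + K)%nat. rewrite sum_Sn. unfold plus; simpl. specialize (Hb (S (n+K))). lra. }
 exact H. Qed.

Lemma prodR_ext F G m : (forall j, F j = G j) -> prodR F m = prodR G m.
Proof. intro H. induction m; simpl; rewrite ?IHm, ?H; auto. Qed.

Lemma prodR_shift F m : prodR F (S m) = F O * prodR (fun j => F (S j)) m.
Proof. induction m. simpl. ring. change (prodR F (S (S m))) with (prodR F (S m) * F (S (S m))).
 rewrite IHm. simpl. ring. Qed.

Lemma pow_le_one q j : 0 <= q <= 1 -> q ^ j <= 1.
Proof. intro H. induction j; simpl. lra. pose proof (pow_le q j ltac:(lra)). nra. Qed.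

Definition Qf q t n := prodR (fun j => 1 - q ^ j * t) n.

Lemma Qf_S q t n : Qf q t (S n) = (1 - t) * Qf q (q * t) n.
Proof. unfold Qf. rewrite prodR_shift. f_equal. simpl; ring. apply prodR_ext. intro j. simpl. ring. Qed.

Lemma Qf_pos q t n : 0 < q <= 1 -> 0 <= t < 1 -> 0 < Qf q t n.
Proof. intros Hq Ht. unfold Qf.
 assert (Hf: forall j, 0 < 1 - q ^ j * t).
 { intro j. assert (0 <= q ^ j <= 1). { split. apply pow_le; lra. apply pow_le_one. lra. } nra. }
 induction n; simpl. specialize (Hf O); simpl in Hf; exact Hf. apply Rmult_lt_0_compat; auto. specialize (Hf (S n)); exact Hf. Qed.

Lemma sum_rel (a b : nat -> R) t : a O = b O -> (forall k, a (S k) = t * a k + b (S k)) ->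
  forall K, sum_n a (S K) = t * sum_n a K + sum_n b (S K).
Proof. intros H0 HS K. induction K.
 - rewrite sum_Sn, !sum_O, sum_Sn, sum_O. unfold plus; simpl. rewrite HS, H0. ring.
 - assert (E1: sum_n a (S (S K)) = sum_n a (S K) + a (S (S K))) by (rewrite sum_Sn; reflexivity).
   assert (E2: sum_n b (S (S K)) = sum_n b (S K) + b (S (S K))) by (rewrite sum_Sn; reflexivity).
   assert (E3: sum_n a (S K) = sum_n a K + a (S K)) by (rewrite sum_Sn; reflexivity).
   rewrite E1, E2, (HS (S K)). rewrite IHK at 1. rewrite E3. lra. Qed.

Lemma main_series q n : 0 < q <= 1 -> forall t, 0 <= t < 1 ->
  is_series (fun k => cb q n k * t ^ k) (/ Qf q t n).
Proof. intro Hq. induction n; intros t Ht.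
 - apply is_series_ext with (fun k => t ^ k). intro k. rewrite cb_0k by lra. lra.
   unfold Qf; simpl. replace (1 - 1 * t) with (1 - t) by ring. apply is_series_geom. rewrite Rabs_pos_eq; lra.
 - set (a := fun k => cb q (S n) k * t ^ k).
   set (b := fun k => cb q n k * (q * t) ^ k).
   assert (Hqt: 0 <= q * t < 1) by nra.
   pose proof (IHn (q * t) Hqt) as Hb. fold b in Hb. set (L' := / Qf q (q*t) n) in Hb.
   assert (Hrel: forall K, sum_n a (S K) = t * sum_n a K + sum_n b (S K)).
   { apply sum_rel. unfold a, b. rewrite !cb_n0 by lra. simpl; ring.
     intro k. unfold a, b. rewrite cb_R3 by lra. rewrite Rpow_mult_distr. simpl. ring. }
   assert (Ha0: forall k, 0 <= a k). { intro k. unfold a. pose proof (cb_pos q (S n) k ltac:(lra)). pose proof (pow_le t k ltac:(lra)). nra. }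
   assert (Hb0: forall k, 0 <= b k). { intro k. unfold b. pose proof (cb_pos q n k ltac:(lra)). pose proof (pow_le (q*t) k ltac:(lra)). nra. }
   assert (Hinc: forall K, sum_n a K <= sum_n a (S K)). { intro K. rewrite sum_Sn. unfold plus; simpl. specialize (Ha0 (S K)). lra. }
   assert (Hbd: forall K, sum_n a K <= L' / (1 - t)).
   { intro K. pose proof (Hinc K). rewrite Hrel in H. pose proof (sum_n_le_lim b L' (S K) Hb0 Hb).
     apply Rmult_le_reg_r with (1 - t). lra. unfold Rdiv. rewrite Rmult_assoc, Rinv_l by lra. lra. }
   destruct (ex_finite_lim_seq_incr _ _ Hinc Hbd) as [l Hl].
   assert (Hl1 : is_lim_seq (fun K => sum_n a (S K)) l). { apply (is_lim_seq_incr_1 (sum_n a) l). exact Hl. }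
   assert (Hl2 : is_lim_seq (fun K => sum_n a (S K)) (t * l + L')).
   { apply is_lim_seq_ext with (fun K => t * sum_n a K + sum_n b (S K)). intro K; symmetry; apply Hrel.
     apply is_lim_seq_plus'. apply is_lim_seq_mult'. apply is_lim_seq_const. exact Hl.
     apply (is_lim_seq_incr_1 (sum_n b) L'). exact Hb. }
   pose proof (is_lim_seq_unique _ _ Hl1) as E1. rewrite (is_lim_seq_unique _ _ Hl2) in E1.
   injection E1 as E1.
   assert (El: l = / Qf q t (S n)).
   { rewrite Qf_S. pose proof (Qf_pos q (q*t) n Hq Hqt). unfold L' in E1. field_simplify_eq. 2: split; lra.
     assert (l * (1 - t) = / Qf q (q * t) n) by lra. replace (- l * t * Qf q (q * t) n + l * Qf q (q * t) n) with ((l * (1-t)) * Qf q (q * t) n) by ring. rewrite H0. field. lra. }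
   rewrite <- El. exact Hl. Qed.

Section Mom.
Variables (q t : R) (n : nat).
Hypothesis Hq : 0 < q <= 1.
Hypothesis Ht : 0 <= t < 1.

Definition Ak k := cb q n k * t ^ k.
Definition A1 k := match k with O => 0 | S j => t * Ak j end.
Definition A2 k := match k with O => 0 | S j => t * A1 j end.

Lemma Ak_nonneg k : 0 <= Ak k.
Proof. unfold Ak. pose proof (cb_pos q n k ltac:(lra)). pose proof (pow_le t k ltac:(lra)). nra. Qed.

Lemma A1_nonneg k : 0 <= A1 k.
Proof. destruct k; simpl. lra. pose proof (Ak_nonneg k). nra. Qed.

Lemma A2_nonneg k : 0 <= A2 k.
Proof. destruct k; simpl. lra. pose proof (A1_nonneg k). nra. Qed.

Lemma node_0 : node q n 0 = 0.
Proof. unfold node. rewrite qint_0. unfold Rdiv. ring. Qed.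

Lemma Ak_node k : Ak k * node q n k = A1 k.
Proof. destruct k. rewrite node_0. simpl. ring.
 simpl A1. unfold Ak. simpl pow. rewrite <- (cb_R2 q n k) by lra. ring. Qed.

Lemma node_bounds k : 0 <= node q n k <= 1.
Proof. unfold node. pose proof (qint_nonneg q k ltac:(lra)).
 pose proof (qint_mono q k (k + n) ltac:(lra) ltac:(lia)).
 destruct (Req_dec (qint q (k+n)) 0) as [E|E].
 - rewrite E. unfold Rdiv. rewrite Rinv_0. lra.
 - pose proof (qint_nonneg q (k+n) ltac:(lra)) as Hn.
   assert (Hp: 0 < qint q (k+n)) by (destruct Hn as [Hn|Hn]; [exact Hn | exfalso; apply E; symmetry; exact Hn]).
   split. apply Rdiv_le_0_compat; lra. apply (proj1 (Rcomplements.Rdiv_le_1 _ _ Hp)); lra. Qed.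

Lemma inv_le_aux Y D D' : 0 <= Y -> 0 < D -> D <= D' -> Y / D' <= Y / D.
Proof. intros. unfold Rdiv. apply Rmult_le_compat_l; auto. apply Rinv_le_contravar; auto. Qed.

Lemma Ak_node2 k : Ak k * node q n k ^ 2 <= A1 k / qint q (S n) + A2 k.
Proof. replace (Ak k * node q n k ^ 2) with ((Ak k * node q n k) * node q n k) by ring.
 rewrite Ak_node. destruct k as [|j].
 - simpl. unfold Rdiv. lra.
 - destruct j as [|i].
   + simpl A1. simpl A2. unfold node. rewrite qint_1. simpl (1 + n)%nat.
     unfold Ak. rewrite cb_n0 by lra. simpl. lra.
   + change (A1 (S (S i))) with (t * Ak (S i)). change (A2 (S (S i))) with (t * A1 (S i)). rewrite <- (Ak_node (S i)).
     assert (Hn: 0 < qint q (S n)) by (apply qint_pos; lra || lia).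
     assert (H1: 0 < qint q (S i + n)) by (apply qint_pos; lra || lia).
     assert (H2: qint q (S i + n) <= qint q (S (S i) + n)) by (apply qint_mono; lra || lia).
     assert (H3: qint q (S n) <= qint q (S (S i) + n)) by (apply qint_mono; lra || lia).
     assert (Hi: 0 <= qint q (S i)) by (apply qint_nonneg; lra).
     pose proof (Ak_nonneg (S i)) as HX.
     set (X := Ak (S i)) in *.
     unfold node. rewrite qint_S'.
     set (D2 := qint q (S (S i) + n)) in *. set (D1 := qint q (S i + n)) in *. set (Dn := qint q (S n)) in *.
     set (a := qint q (S i)) in *.
     assert (E: t * X * ((1 + q * a) / D2) = t * (X / D2) + t * (q * (X * a) / D2)) by (field; lra).
     rewrite E.
     assert (F1: X / D2 <= X / Dn) by (apply inv_le_aux; lra).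
     assert (F2: q * (X * a) / D2 <= X * (a / D1)).
     { apply Rle_trans with ((X * a) / D2).
       - unfold Rdiv. assert (0 <= X * a * / D2). { apply Rmult_le_pos. nra. left; apply Rinv_0_lt_compat; lra. } nra.
       - replace (X * (a / D1)) with ((X * a) / D1) by (field; lra). apply inv_le_aux; nra. }
     assert (Ht0: 0 <= t) by lra.
     replace (t * X / Dn) with (t * (X / Dn)) by (field; lra).
     apply Rplus_le_compat; apply Rmult_le_compat_l; auto. Qed.

Definition Tk k := A1 k / qint q (S n) + A2 k - 2 * t * A1 k + t ^ 2 * Ak k.

Lemma Tk_bound k : Ak k * (node q n k - t) ^ 2 <= Tk k.
Proof. unfold Tk. pose proof (Ak_node2 k). pose proof (Ak_node k).
 replace (Ak k * (node q n k - t) ^ 2) with (Ak k * node q n k ^ 2 - 2 * t * (Ak k * node q n k) + t^2 * Ak k) by ring.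
 rewrite H0. lra. Qed.

Lemma Ak_series : is_series Ak (/ Qf q t n).
Proof. apply main_series; auto. Qed.

Lemma Tk_series : is_series Tk (t / (Qf q t n * qint q (S n))).
Proof. pose proof Ak_series as H0.
 pose proof (is_series_shift1 _ _ t H0) as H1.
 assert (H1': is_series A1 (t * / Qf q t n)). { eapply is_series_ext; [|exact H1]. intros [|k]; reflexivity. }
 pose proof (is_series_shift1 _ _ t H1') as H2.
 assert (H2': is_series A2 (t * (t * / Qf q t n))). { eapply is_series_ext; [|exact H2]. intros [|k]; reflexivity. }
 pose proof (Qf_pos q t n Hq Ht). pose proof (qint_pos q (S n) ltac:(lra) ltac:(lia)).
 replace (t / (Qf q t n * qint q (S n))) with
   ((/ qint q (S n)) * (t * / Qf q t n) + t * (t * / Qf q t n) - 2 * t * (t * / Qf q t n) + t ^ 2 * / Qf q t n) by (field; lra).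
 apply is_series_ext with (fun k => (/ qint q (S n)) * A1 k + A2 k - 2 * t * A1 k + t ^ 2 * Ak k).
 { intro k. unfold Tk. unfold Rdiv. lra. }
 apply is_series_plus_R. apply is_series_minus_R. apply is_series_plus_R.
 apply is_series_scal_R; auto. auto. apply is_series_scal_R; auto. apply is_series_scal_R; auto. Qed.

Lemma KE (hk : nat -> R) h0 e K B : 0 <= K -> (forall k, Rabs (hk k) <= B) ->
  (forall k, Rabs (hk k - h0) <= e + K * (node q n k - t) ^ 2) ->
  Rabs (Qf q t n * Series (fun k => Ak k * hk k) - h0) <= e + K * t / qint q (S n).
Proof. intros HK HB Hk.
 pose proof (Qf_pos q t n Hq Ht) as HQ. pose proof (qint_pos q (S n) ltac:(lra) ltac:(lia)) as HD.
 assert (Hex: ex_series (fun k => Ak k * hk k)).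
 { apply (@ex_series_le _ R_CompleteNormedModule) with (fun k => B * Ak k).
   - intro k. change (norm (Ak k * hk k)) with (Rabs (Ak k * hk k)). rewrite Rabs_mult, Rabs_pos_eq by apply Ak_nonneg.
     pose proof (Ak_nonneg k). specialize (HB k). nra.
   - exists (B * / Qf q t n). apply is_series_scal_R. apply Ak_series. }
 pose proof (Series_correct _ Hex) as HS. set (Sm := Series (fun k => Ak k * hk k)) in *.
 assert (HD1: is_series (fun k => Ak k * hk k - h0 * Ak k) (Sm - h0 * / Qf q t n)).
 { apply is_series_minus_R; auto. apply is_series_scal_R. apply Ak_series. }
 assert (HU: is_series (fun k => e * Ak k + K * Tk k) (e * / Qf q t n + K * (t / (Qf q t n * qint q (S n))))).
 { apply is_series_plus_R; apply is_series_scal_R. apply Ak_series. apply Tk_series. }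
 assert (Hb: forall k, Rabs (Ak k * hk k - h0 * Ak k) <= e * Ak k + K * Tk k).
 { intro k. replace (Ak k * hk k - h0 * Ak k) with (Ak k * (hk k - h0)) by ring.
   rewrite Rabs_mult, Rabs_pos_eq by apply Ak_nonneg. pose proof (Ak_nonneg k). pose proof (Tk_bound k).
   specialize (Hk k). apply Rle_trans with (Ak k * (e + K * (node q n k - t) ^ 2)). apply Rmult_le_compat_l; auto.
   nra. }
 assert (Up: Sm - h0 * / Qf q t n <= e * / Qf q t n + K * (t / (Qf q t n * qint q (S n)))).
 { apply (is_series_le_R _ _ _ _ HD1 HU). intro k. specialize (Hb k). apply Rabs_le_between in Hb. lra. }
 assert (Lo: - (e * / Qf q t n + K * (t / (Qf q t n * qint q (S n)))) <= Sm - h0 * / Qf q t n).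
 { pose proof (is_series_opp _ _ HU) as HU'.
   apply (is_series_le_R _ _ _ _ HU' HD1). intro k. specialize (Hb k). apply Rabs_le_between in Hb. unfold opp; simpl. lra. }
 replace (Qf q t n * Sm - h0) with (Qf q t n * (Sm - h0 * / Qf q t n)) by (field; lra).
 rewrite Rabs_mult, (Rabs_pos_eq (Qf q t n)) by lra.
 replace (e + K * t / qint q (S n)) with (Qf q t n * (e * / Qf q t n + K * (t / (Qf q t n * qint q (S n))))) by (field; lra).
 apply Rmult_le_compat_l. lra. apply Rabs_le_between. lra. Qed.

Lemma UB (hk : nat -> R) B B' : (forall k, hk k <= B) -> (forall k, Rabs (hk k) <= B') ->
  Qf q t n * Series (fun k => Ak k * hk k) <= B.
Proof. intros HB HB'. pose proof (Qf_pos q t n Hq Ht) as HQ.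
 assert (Hex: ex_series (fun k => Ak k * hk k)).
 { apply (@ex_series_le _ R_CompleteNormedModule) with (fun k => B' * Ak k).
   - intro k. change (norm (Ak k * hk k)) with (Rabs (Ak k * hk k)). rewrite Rabs_mult, Rabs_pos_eq by apply Ak_nonneg.
     pose proof (Ak_nonneg k). specialize (HB' k). nra.
   - exists (B' * / Qf q t n). apply is_series_scal_R. apply Ak_series. }
 pose proof (Series_correct _ Hex) as HS.
 assert (HBs: is_series (fun k => B * Ak k) (B * / Qf q t n)) by (apply is_series_scal_R; apply Ak_series).
 pose proof (is_series_le_R _ _ _ _ HS HBs) as Hle.
 assert (Series (fun k => Ak k * hk k) <= B * / Qf q t n).
 { apply Hle. intro k. pose proof (Ak_nonneg k). specialize (HB k). nra. }
 apply Rle_trans with (Qf q t n * (B * / Qf q t n)). apply Rmult_le_compat_l; lra. right; field; lra. Qed.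

End Mom.

Definition clamp (x1 xN y : R) := Rmax x1 (Rmin xN y).

Lemma clamp_in x1 xN y : x1 <= xN -> inI x1 xN (clamp x1 xN y).
Proof. intro H. unfold inI, clamp, Rmax, Rmin. repeat destruct Rle_dec; lra. Qed.

Lemma clamp_id x1 xN y : inI x1 xN y -> clamp x1 xN y = y.
Proof. unfold inI, clamp, Rmax, Rmin. intro H. repeat destruct Rle_dec; lra. Qed.

Lemma clamp_lip x1 xN u v : x1 <= xN -> Rabs (clamp x1 xN u - clamp x1 xN v) <= Rabs (u - v).
Proof. intro H. unfold clamp, Rmax, Rmin. repeat destruct Rle_dec; split_Rabs; lra. Qed.

Lemma contI_ext x1 xN h : x1 <= xN -> contI x1 xN h ->
  forall y, continuity_pt (fun y => h (clamp x1 xN y)) y.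
Proof. intros Hle Hc y. apply continuity_pt_filterlim.
 intros P HP. set (c := clamp x1 xN y) in *.
 specialize (Hc c (clamp_in x1 xN y Hle) P HP).
 destruct Hc as [eps He]. exists eps. intros w Hw.
 apply He. 2: apply clamp_in; auto.
 change (Rabs (clamp x1 xN w - c) < eps). change (Rabs (w - y) < eps) in Hw.
 pose proof (clamp_lip x1 xN w y Hle). unfold c. lra. Qed.

Lemma contI_bound x1 xN h : x1 <= xN -> contI x1 xN h -> exists B, 0 <= B /\ forall y, inI x1 xN y -> Rabs (h y) <= B.
Proof. intros Hle Hc. pose proof (contI_ext _ _ _ Hle Hc) as Hc'.
 destruct (continuity_ab_maj _ x1 xN Hle (fun c _ => Hc' c)) as [M [HM _]].
 destruct (continuity_ab_min _ x1 xN Hle (fun c _ => Hc' c)) as [m [Hm _]].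
 exists (Rmax 0 (Rmax (Rabs (h (clamp x1 xN M))) (Rabs (h (clamp x1 xN m))))). split. apply Rmax_l.
 intros y Hy. specialize (HM y Hy). specialize (Hm y Hy). simpl in HM, Hm. rewrite (clamp_id x1 xN y Hy) in HM, Hm.
 pose proof (Rmax_l 0 (Rmax (Rabs (h (clamp x1 xN M))) (Rabs (h (clamp x1 xN m))))).
 pose proof (Rmax_r 0 (Rmax (Rabs (h (clamp x1 xN M))) (Rabs (h (clamp x1 xN m))))).
 pose proof (Rmax_l (Rabs (h (clamp x1 xN M))) (Rabs (h (clamp x1 xN m)))).
 pose proof (Rmax_r (Rabs (h (clamp x1 xN M))) (Rabs (h (clamp x1 xN m)))).
 revert H H0 H1 H2 HM Hm. split_Rabs; lra. Qed.

Lemma contI_argmin x1 xN h : x1 <= xN -> contI x1 xN h -> exists z, inI x1 xN z /\ forall y, inI x1 xN y -> h z <= h y.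
Proof. intros Hle Hc. pose proof (contI_ext _ _ _ Hle Hc) as Hc'.
 destruct (continuity_ab_min _ x1 xN Hle (fun c _ => Hc' c)) as [m [Hm Hmi]].
 exists m. split. exact Hmi. intros y Hy. specialize (Hm y Hy). simpl in Hm. rewrite !clamp_id in Hm by auto. exact Hm. Qed.

Lemma contI_argmax_absdiff x1 xN h1 h2 : x1 <= xN -> contI x1 xN h1 -> contI x1 xN h2 ->
  exists z, inI x1 xN z /\ forall y, inI x1 xN y -> Rabs (h1 y - h2 y) <= Rabs (h1 z - h2 z).
Proof. intros Hle Hc1 Hc2. pose proof (contI_ext _ _ _ Hle Hc1) as C1. pose proof (contI_ext _ _ _ Hle Hc2) as C2.
 set (F := fun y => Rabs (h1 (clamp x1 xN y) - h2 (clamp x1 xN y))).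
 assert (CF: forall c, continuity_pt F c).
 { intro c. unfold F. apply (continuity_pt_comp (fun y => h1 (clamp x1 xN y) - h2 (clamp x1 xN y)) Rabs).
   apply continuity_pt_minus; auto. apply Rcontinuity_abs. }
 destruct (continuity_ab_maj F x1 xN Hle (fun c _ => CF c)) as [M [HM HMi]].
 exists M. split. exact HMi. intros y Hy. specialize (HM y Hy). unfold F in HM. rewrite !clamp_id in HM by auto. exact HM. Qed.

Lemma contI_unif x1 xN h : x1 <= xN -> contI x1 xN h -> forall eps, 0 < eps -> exists delta, 0 < delta /\
  forall u v, inI x1 xN u -> inI x1 xN v -> Rabs (u - v) < delta -> Rabs (h u - h v) < eps.
Proof. intros Hle Hc eps He. pose proof (contI_ext _ _ _ Hle Hc) as Hc'.
 pose proof (Heine (fun y => h (clamp x1 xN y)) (fun c => x1 <= c <= xN) (compact_P3 x1 xN) (fun c _ => Hc' c)) as U.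
 destruct (U (mkposreal eps He)) as [d Hd]. exists d. split. apply cond_pos.
 intros u v Hu Hv Huv. specialize (Hd u v Hu Hv Huv). simpl in Hd. rewrite !clamp_id in Hd by auto. exact Hd. Qed.

Lemma minI_spec x1 xN h m y0 : (forall y, inI x1 xN y -> m <= h y) -> inI x1 xN y0 ->
  m <= minI x1 xN h /\ minI x1 xN h <= h y0.
Proof. intros Hm Hy0. unfold minI.
 set (E := fun v => exists y, inI x1 xN y /\ v = h y).
 generalize (Glb_Rbar_correct E). destruct (Glb_Rbar E) as [r| |]; intros [H1 H2]; simpl.
 - split. assert (Rbar_le m r). { apply H2. intros v [y [Hy ->]]. simpl. auto. } exact H.
   assert (Rbar_le r (h y0)). { apply H1. exists y0; auto. } exact H.
 - exfalso. assert (Rbar_le p_infty (h y0)). { apply H1. exists y0; auto. } exact H.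
 - exfalso. assert (Rbar_le m m_infty). { apply H2. intros v [y [Hy ->]]. simpl. auto. } exact H. Qed.

Lemma maxI_spec x1 xN h M y0 : (forall y, inI x1 xN y -> h y <= M) -> inI x1 xN y0 ->
  h y0 <= maxI x1 xN h.
Proof. intros HM Hy0. unfold maxI.
 set (E := fun v => exists y, inI x1 xN y /\ v = h y).
 generalize (Lub_Rbar_correct E). destruct (Lub_Rbar E) as [r| |]; intros [H1 H2]; simpl.
 - assert (Rbar_le (h y0) r). { apply H1. exists y0; auto. } exact H.
 - exfalso. assert (Rbar_le p_infty M). { apply H2. intros v [y [Hy ->]]. simpl. auto. } exact H.
 - exfalso. assert (Rbar_le (h y0) m_infty). { apply H1. exists y0; auto. } exact H. Qed.

Lemma Pnq_Qf x1 xN n q y : x1 < xN -> Pnq x1 xN n q y = Qf q ((y - x1) / (xN - x1)) n.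
Proof. intro H. unfold Pnq, Qf. set (L := xN - x1). set (t := (y - x1) / L).
 assert (HL: L <> 0) by (unfold L; lra).
 assert (E: forall m, prodR (fun j => L - q ^ j * (y - x1)) m = L ^ (S m) * prodR (fun j => 1 - q ^ j * t) m).
 { induction m; simpl. unfold t. field. auto. rewrite IHm. unfold t. simpl. field. auto. }
 rewrite E. field. apply pow_nonzero. auto. Qed.

Lemma MKZ_rep x1 xN n q h y : x1 < xN -> x1 <= y < xN ->
  MKZ x1 xN n q h y = Qf q ((y - x1) / (xN - x1)) n *
    Series (fun k => Ak q ((y - x1) / (xN - x1)) n k * h (x1 + (xN - x1) * node q n k)).
Proof. intros H Hy. unfold MKZ. destruct (Rle_dec x1 y); [|lra]. destruct (Rlt_dec y xN); [|lra].
 rewrite Pnq_Qf by auto. reflexivity. Qed.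

Lemma MKZ_end x1 xN n q h : MKZ x1 xN n q h xN = h xN.
Proof. unfold MKZ. destruct (Rle_dec x1 xN); auto. destruct (Rlt_dec xN xN); auto. lra. Qed.

Lemma MKZ_ub x1 xN n q h B : x1 < xN -> 0 < q <= 1 -> (forall y, inI x1 xN y -> Rabs (h y) <= B) ->
  forall y, inI x1 xN y -> MKZ x1 xN n q h y <= B.
Proof. intros H Hq HB y Hy. destruct (Req_dec y xN) as [->|Hne].
 - rewrite MKZ_end. specialize (HB xN Hy). split_Rabs; lra.
 - unfold inI in Hy. rewrite MKZ_rep by lra.
   assert (Ht: 0 <= (y - x1) / (xN - x1) < 1).
   { split. apply Rdiv_le_0_compat; lra. apply (proj1 (Rcomplements.Rdiv_lt_1 (y - x1) (xN - x1) ltac:(lra))); lra. }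
   assert (Hz: forall k, inI x1 xN (x1 + (xN - x1) * node q n k)).
   { intro k. pose proof (node_bounds q n Hq k). unfold inI. nra. }
   apply (UB q _ n Hq Ht _ B B).
   + intro k. specialize (HB _ (Hz k)). split_Rabs; lra.
   + intro k. apply HB, Hz. Qed.

Lemma bern q j : 0 <= q <= 1 -> 1 - INR j * (1 - q) <= q ^ j.
Proof. intro H. induction j. simpl. lra. rewrite S_INR. simpl. pose proof (pos_INR j). assert (0 <= INR j * ((1 - q) * (1 - q))) by (apply Rmult_le_pos; nra). assert (q * (1 - INR j * (1 - q)) <= q * q ^ j) by (apply Rmult_le_compat_l; lra). nra. Qed.

Lemma qint_lb q m : 0 < q <= 1 -> INR m - INR m ^ 2 * (1 - q) <= qint q m.
Proof. intro H. induction m. rewrite qint_0. simpl. lra.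
 rewrite qint_S. pose proof (bern q m ltac:(lra)). rewrite S_INR. pose proof (pos_INR m). nra. Qed.

Lemma QL (q : nat -> R) : (forall n, (1 <= n)%nat -> 0 < q n <= 1) -> is_lim_seq q 1 ->
  forall M, exists n0, forall n, (n0 <= n)%nat -> (1 <= n)%nat -> M <= qint (q n) (S n).
Proof. intros Hq Hl M.
 destruct (INR_archimed 1 (Rabs M + 1) ltac:(lra)) as [m Hm]. rewrite Rmult_1_r in Hm.
 assert (Hm0: 0 < INR m) by (pose proof (Rabs_pos M); lra).
 apply is_lim_seq_spec in Hl.
 assert (Hp: 0 < / (INR m ^ 2)) by (apply Rinv_0_lt_compat; apply pow_lt; lra).
 destruct (Hl (mkposreal _ Hp)) as [n1 Hn1]. simpl in Hn1.
 exists (Nat.max n1 m). intros n Hn Hn1'.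
 specialize (Hn1 n ltac:(lia)). specialize (Hq n Hn1').
 assert (E1: qint (q n) m <= qint (q n) (S n)) by (apply qint_mono; lra || lia).
 pose proof (qint_lb (q n) m Hq).
 assert (INR m ^ 2 * (1 - q n) < 1).
 { rewrite Rabs_left1 in Hn1 by lra. apply Rmult_lt_reg_r with (/ INR m ^ 2). auto.
   replace (INR m ^ 2 * (1 - q n) * / INR m ^ 2) with (1 - q n) by (field; lra). simpl. lra. }
 pose proof (Rle_abs M). lra. Qed.

Lemma approx x1 xN f (q : nat -> R) : x1 < xN -> contI x1 xN f ->
  (forall n, (1 <= n)%nat -> 0 < q n <= 1) -> is_lim_seq q 1 ->
  forall eps, 0 < eps -> exists n0, forall n y, (n0 <= n)%nat -> (1 <= n)%nat -> inI x1 xN y ->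
    Rabs (MKZ x1 xN n (q n) f y - f y) <= eps.
Proof. intros Hx Hf Hq Hl eps He.
 destruct (contI_bound x1 xN f ltac:(lra) Hf) as [B [HB0 HB]].
 destruct (contI_unif x1 xN f ltac:(lra) Hf (eps/2) ltac:(lra)) as [d [Hd HU]].
 set (L := xN - x1).
 set (K := 2 * B * L ^ 2 / d ^ 2).
 assert (HK: 0 <= K). { unfold K. apply Rdiv_le_0_compat. unfold L. pose proof (pow2_ge_0 (xN - x1)). nra. apply pow_lt; lra. }
 destruct (QL q Hq Hl (2 * K / eps + 1)) as [n0 Hn0].
 exists n0. intros n y Hn Hn1 Hy.
 destruct (Req_dec y xN) as [->|Hne].
 { rewrite MKZ_end. rewrite Rminus_diag, Rabs_R0. lra. }
 specialize (Hq n Hn1). specialize (Hn0 n Hn Hn1).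
 pose proof Hy as Hy'. unfold inI in Hy'.
 rewrite MKZ_rep by lra.
 set (t := (y - x1) / (xN - x1)).
 assert (Ht: 0 <= t < 1).
 { split. apply Rdiv_le_0_compat; lra. apply (proj1 (Rcomplements.Rdiv_lt_1 (y - x1) (xN - x1) ltac:(lra))); lra. }
 assert (Hyt: y = x1 + L * t). { unfold t, L. field. lra. }
 assert (Hz: forall k, inI x1 xN (x1 + (xN - x1) * node (q n) n k)).
 { intro k. pose proof (node_bounds (q n) n Hq k). unfold inI. nra. }
 assert (HL: 0 < L) by (unfold L; lra).
 pose proof (KE (q n) t n Hq Ht (fun k => f (x1 + (xN - x1) * node (q n) n k)) (f y) (eps/2) K B HK
   (fun k => HB _ (Hz k))) as HKE.
 assert (HD: 0 < qint (q n) (S n)) by (apply qint_pos; lra || lia).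
 eapply Rle_trans. apply HKE.
 - intro k. set (nd := node (q n) n k).
   destruct (Rlt_dec (Rabs (x1 + (xN - x1) * nd - y)) d) as [Hc|Hc].
   + specialize (HU _ _ (Hz k) Hy Hc). unfold nd in *. pose proof (pow2_ge_0 (node (q n) n k - t)). nra.
   + apply Rnot_lt_le in Hc.
     assert (E: x1 + (xN - x1) * nd - y = L * (nd - t)) by (rewrite Hyt; unfold L; ring).
     rewrite E in Hc.
     assert (Hsq: d ^ 2 <= L ^ 2 * (nd - t) ^ 2).
     { replace (L ^ 2 * (nd - t) ^ 2) with ((L * (nd - t)) ^ 2) by ring.
       revert Hc. split_Rabs; intros; nra. }
     assert (HKd: K * (nd - t) ^ 2 >= 2 * B).
     { unfold K. unfold Rdiv. assert (0 < d ^ 2) by (apply pow_lt; lra).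
       replace (2 * B * L ^ 2 * / d ^ 2 * (nd - t) ^ 2) with (2 * B * (L ^ 2 * (nd - t) ^ 2) / d ^ 2) by (field; lra).
       replace (2 * B * (L ^ 2 * (nd - t) ^ 2) / d ^ 2) with (2 * B + (2 * B * (L ^ 2 * (nd - t) ^ 2 - d ^ 2)) / d ^ 2) by (field; lra).
       assert (0 <= (2 * B * (L ^ 2 * (nd - t) ^ 2 - d ^ 2)) / d ^ 2). { apply Rdiv_le_0_compat; [|lra]. apply Rmult_le_pos; lra. }
       lra. }
     unfold nd in *. pose proof (HB _ (Hz k)) as Q1. pose proof (HB _ Hy) as Q2. revert Q1 Q2. split_Rabs; intros; lra.
 - assert (K * t / qint (q n) (S n) <= eps / 2).
   { apply Rle_trans with (K / qint (q n) (S n)).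
     unfold Rdiv. apply Rmult_le_compat_r. left; apply Rinv_0_lt_compat; auto. nra.
     apply Rcomplements.Rle_div_l. auto.
     apply Rle_trans with (eps / 2 * (2 * K / eps)). right. field. lra.
     apply Rmult_le_compat_l. lra. lra. }
   lra. Qed.

Theorem theorem4p3
  (N : nat) (hN : (2 <= N)%nat)
  (x : nat -> R) (hx : forall i, (1 <= i < N)%nat -> x i < x (S i))
  (a b : nat -> R)
  (hu1 : forall i, (1 <= i < N)%nat -> a i * x 1%nat + b i = x i)
  (hu2 : forall i, (1 <= i < N)%nat -> a i * x N + b i = x (S i))
  (f g : R -> R) (hf : contI (x 1%nat) (x N) f) (hg : contI (x 1%nat) (x N) g)
  (hfg : forall y, inI (x 1%nat) (x N) y -> g y <= f y)
  (q : nat -> R) (hq : forall n, (1 <= n)%nat -> 0 < q n <= 1)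
  (hqlim : is_lim_seq q 1)
  (alpha : nat -> R -> R)
  (halpha_cont : forall i, (1 <= i < N)%nat -> contI (x 1%nat) (x N) (alpha i))
  (h1 : exists c, c < 1 /\
          forall i y, (1 <= i < N)%nat -> inI (x 1%nat) (x N) y -> Rabs (alpha i y) <= c)
  (h2 : forall n i y, (1 <= n)%nat -> (1 <= i < N)%nat -> inI (x 1%nat) (x N) y ->
          0 <= alpha i y /\
          alpha i y <= Rmin
            (minI (x 1%nat) (x N) (fun z => f (a i * z + b i) - g (a i * z + b i))
             / (maxI (x 1%nat) (x N) (MKZ (x 1%nat) (x N) n (q n) f)
                - minI (x 1%nat) (x N) g))
            1)
  (G : nat -> R -> R)
  (hG : forall n, (1 <= n)%nat ->
          contI (x 1%nat) (x N) (G n) /\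
          forall i y, (1 <= i < N)%nat -> inI (x 1%nat) (x N) y ->
            G n (a i * y + b i) =
            f (a i * y + b i) + alpha i y * (G n y - MKZ (x 1%nat) (x N) n (q n) f y)) :
  (forall n y, (1 <= n)%nat -> inI (x 1%nat) (x N) y -> g y <= G n y) /\
  (forall eps, 0 < eps -> exists n0, forall n y, (n0 <= n)%nat -> (1 <= n)%nat ->
     inI (x 1%nat) (x N) y -> Rabs (G n y - f y) < eps).
Proof.
 set (x1 := x 1%nat) in *. set (xN := x N) in *.
 assert (Hmono: forall i j, (1 <= i)%nat -> (i <= j)%nat -> (j <= N)%nat -> x i <= x j).
 { intros i j Hi Hij HjN. induction Hij. lra.
   apply Rle_trans with (x m). apply IHHij. lia. left. apply hx. lia. }
 assert (Hx1N: x1 < xN).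
 { unfold x1, xN. apply Rlt_le_trans with (x 2%nat). apply hx. lia. apply Hmono; lia. }
 assert (Ha: forall i, (1 <= i < N)%nat -> 0 < a i).
 { intros i Hi. pose proof (hu1 i Hi). pose proof (hu2 i Hi). pose proof (hx i Hi).
   assert (a i * (xN - x1) > 0) by (unfold x1, xN in *; lra). nra. }
 assert (Hbnd: forall i, (1 <= i < N)%nat -> x1 <= x i /\ x (S i) <= xN).
 { intros i Hi. unfold x1, xN. split; apply Hmono; lia. }
 assert (Hu_in: forall i y, (1 <= i < N)%nat -> inI x1 xN y -> inI x1 xN (a i * y + b i)).
 { intros i y Hi [Hy1 Hy2]. pose proof (hu1 i Hi). pose proof (hu2 i Hi). pose proof (Ha i Hi). pose proof (Hbnd i Hi).
   fold x1 xN in H, H0. split; nra. }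
 assert (Hcover: forall z, inI x1 xN z -> exists i y, (1 <= i < N)%nat /\ inI x1 xN y /\ z = a i * y + b i).
 { intros z [Hz1 Hz2].
   assert (Hfind: forall m, (1 <= m)%nat -> (m < N)%nat -> z <= x (S m) -> exists i, (1 <= i <= m)%nat /\ x i <= z <= x (S i)).
   { induction m; intros Hm HmN Hzm. lia.
     destruct (Nat.eq_dec m 0) as [->|Hm0]. exists 1%nat. split. lia. split; auto.
     destruct (Rle_dec z (x (S m))) as [Hle|Hlt].
     - destruct (IHm ltac:(lia) ltac:(lia) Hle) as [i [Hi1 Hi2]]. exists i. split. lia. auto.
     - exists (S m). split. lia. lra. }
   destruct (Hfind (N - 1)%nat ltac:(lia) ltac:(lia)) as [i [Hi Hzi]].
   { replace (S (N - 1)) with N by lia. exact Hz2. }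
   assert (Hi': (1 <= i < N)%nat) by lia.
   exists i, ((z - b i) / a i). pose proof (Ha i Hi'). split. auto. split.
   - pose proof (hu1 i Hi'). pose proof (hu2 i Hi'). fold x1 xN in H0, H1. unfold inI. split.
     + apply Rcomplements.Rle_div_r. auto. nra.
     + apply Rcomplements.Rle_div_l. auto. nra.
   - field. lra. }
 destruct h1 as [c [Hc1 Hc]].
 assert (Hc0: 0 <= c). { pose proof (Hc 1%nat x1 ltac:(lia) ltac:(unfold inI; lra)). pose proof (Rabs_pos (alpha 1%nat x1)). lra. }
 destruct (contI_bound x1 xN f ltac:(lra) hf) as [Bf [HBf0 HBf]].
 destruct (contI_bound x1 xN g ltac:(lra) hg) as [Bg [HBg0 HBg]].
 split.
 - intros n y Hn Hy. destruct (hG n Hn) as [HGc HGeq].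
   set (phg := minI x1 xN g). set (Phi := maxI x1 xN (MKZ x1 xN n (q n) f)).
   assert (Hgl: forall z, inI x1 xN z -> phg <= g z).
   { intros z Hz. apply (minI_spec x1 xN g (- Bg) z); auto. intros w Hw. specialize (HBg w Hw). split_Rabs; lra. }
   assert (HPhi: forall z, inI x1 xN z -> MKZ x1 xN n (q n) f z <= Phi).
   { intros z Hz. apply (maxI_spec x1 xN _ Bf z); auto. intros w Hw. apply MKZ_ub; auto. }
   assert (Hphi: forall i, (1 <= i < N)%nat -> forall z, inI x1 xN z ->
      0 <= minI x1 xN (fun z => f (a i * z + b i) - g (a i * z + b i)) /\
      minI x1 xN (fun z => f (a i * z + b i) - g (a i * z + b i)) <= f (a i * z + b i) - g (a i * z + b i)).
   { intros i Hi z Hz. apply (minI_spec x1 xN (fun w => f (a i * w + b i) - g (a i * w + b i)) 0 z); auto. intros w Hw. specialize (hfg _ (Hu_in i w Hi Hw)). lra. }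
   assert (Hkey: forall i z, (1 <= i < N)%nat -> inI x1 xN z ->
      alpha i z * (Phi - phg) <= minI x1 xN (fun z => f (a i * z + b i) - g (a i * z + b i))).
   { intros i z Hi Hz. destruct (h2 n i z Hn Hi Hz) as [Hal Hau]. fold x1 xN phg Phi in Hau.
     set (ph := minI x1 xN (fun z => f (a i * z + b i) - g (a i * z + b i))) in *.
     destruct (Hphi i Hi z Hz) as [Hph0 _]. fold ph in Hph0.
     destruct (Rle_lt_dec (Phi - phg) 0) as [Hd|Hd].
     + nra.
     + pose proof (Rmin_l (ph / (Phi - phg)) 1).
       assert (alpha i z <= ph / (Phi - phg)) by lra.
       apply Rcomplements.Rle_div_r in H0; auto; lra. }
   assert (Hstep: forall i z, (1 <= i < N)%nat -> inI x1 xN z -> phg <= G n z -> g (a i * z + b i) <= G n (a i * z + b i)).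
   { intros i z Hi Hz HGz. rewrite (HGeq i z Hi Hz).
     destruct (h2 n i z Hn Hi Hz) as [Hal _].
     pose proof (Hkey i z Hi Hz). destruct (Hphi i Hi z Hz) as [_ Hp2]. pose proof (HPhi z Hz).
     assert (alpha i z * (phg - Phi) <= alpha i z * (G n z - MKZ x1 xN n (q n) f z)) by (apply Rmult_le_compat_l; lra).
     lra. }
   destruct (contI_argmin x1 xN (G n) ltac:(lra) HGc) as [z0 [Hz0 Hmin]].
   assert (Hm: phg <= G n z0).
   { destruct (Hcover z0 Hz0) as [i [y0 [Hi [Hy0 Ez]]]].
     pose proof (HGeq i y0 Hi Hy0) as Eq. rewrite <- Ez in Eq.
     destruct (h2 n i y0 Hn Hi Hy0) as [Hal _].
     pose proof (Hc i y0 Hi Hy0) as Hac. rewrite Rabs_pos_eq in Hac by auto.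
     pose proof (Hkey i y0 Hi Hy0). destruct (Hphi i Hi y0 Hy0) as [_ Hp2]. rewrite <- Ez in Hp2.
     pose proof (HPhi y0 Hy0). pose proof (Hmin y0 Hy0). pose proof (Hgl z0 Hz0).
     assert (alpha i y0 * (G n z0 - Phi) <= alpha i y0 * (G n y0 - MKZ x1 xN n (q n) f y0)) by (apply Rmult_le_compat_l; lra).
     assert (G n z0 >= phg + alpha i y0 * (G n z0 - phg)) by nra.
     nra. }
   destruct (Hcover y Hy) as [i [y0 [Hi [Hy0 Ey]]]]. rewrite Ey.
   apply Hstep; auto. apply Rle_trans with (G n z0); auto.
 - intros eps He.
   set (d := eps * (1 - c) / 2).
   assert (Hd: 0 < d) by (unfold d; nra).
   destruct (approx x1 xN f q Hx1N hf hq hqlim d Hd) as [n0 Hn0].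
   exists n0. intros n y Hn Hn1 Hy. destruct (hG n Hn1) as [HGc HGeq].
   destruct (contI_argmax_absdiff x1 xN (G n) f ltac:(lra) HGc hf) as [z [Hz Hmax]].
   destruct (Hcover z Hz) as [i [y0 [Hi [Hy0 Ez]]]].
   assert (Eq: G n z - f z = alpha i y0 * ((G n y0 - f y0) + (f y0 - MKZ x1 xN n (q n) f y0))).
   { rewrite Ez, (HGeq i y0 Hi Hy0). ring. }
   set (E0 := Rabs (G n z - f z)) in *.
   assert (HE: E0 <= c * (E0 + d)).
   { unfold E0 at 1. rewrite Eq.
     rewrite Rabs_mult. pose proof (Hc i y0 Hi Hy0).
     pose proof (Hmax y0 Hy0). pose proof (Hn0 n y0 Hn Hn1 Hy0).
     rewrite Rabs_minus_sym in H1.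
     pose proof (Rabs_triang (G n y0 - f y0) (f y0 - MKZ x1 xN n (q n) f y0)).
     apply Rmult_le_compat. apply Rabs_pos. apply Rabs_pos. exact H. lra. }
   pose proof (Hmax y Hy). fold E0 in H.
   assert (E0 * (1 - c) <= c * d) by lra.
   assert (E0 <= c * eps / 2).
   { unfold d in H0. apply Rmult_le_reg_r with (1 - c). lra. nra. }
   nra.
Qed.
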